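(* Let $c^1,\dots,c^n$ be a lattice basis of $\mathbb{Z}^n$, $K=\{x\in\mathbb{R}^n: c^ix\ge0,\ i=1,\dots,n\}$, and $\bar x\in K\cap\mathbb{Z}^n$. Then the recession cone of $Q(\bar x)$ is $K$, and $Q(\bar x)$ is a full-dimensional polyhedron. Moreover, if $\bar x\ne0$ and $\ell:=\ell(\bar x)$, the extreme points of $Q(\bar x)$ are precisely $v^1,\dots,v^\ell$, where $v^\ell=\bar x$ and, for $k=1,\dots,\ell-1$, $v^k$ is the unique point satisfying $c^iv^k=c^i\bar x$ for $i=1,\dots,k-1$, $c^kv^k=c^k\bar x+1$, and $c^iv^k=0$ for $i=k+1,\dots,n$.
   Context: A lattice basis of $\mathbb{Z}^n$ is a set of $n$ linearly independent vectors $c^1,\dots,c^n\in\mathbb{Z}^n$ such that every $v\in\mathbb{Z}^n$ equals $\sum_i\lambda_ic^i$ with all $\lambda_i\in\mathbb{Z}$. The associated lexicographic order: $x\prec y$ iff $x\ne y$ and $c^ix<c^iy$, where $i$ is the smallest index with $c^ix\ne c^iy$; $\preceq,\succeq$ as usual. $Q(\bar x):=\operatorname{conv}\{x\in K\cap\mathbb{Z}^n: x\succeq\bar x\}$. For $\bar x\in K\setminus\{0\}$, the leading index $\ell(\bar x)$ is the largest $i$ with $c^i\bar x>0$. *)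

(* Defs.v *)
From HB Require Import structures.
From mathcomp Require Import all_boot all_order all_algebra.
From mathcomp Require Import reals.
Set Implicit Arguments. Unset Strict Implicit. Unset Printing Implicit Defensive.
Import Order.TTheory GRing.Theory Num.Theory.
Local Open Scope ring_scope.

Section Defs.
Variables (R : realType) (n : nat).
Implicit Types (x y z d : 'cV[R]_n) (P : 'cV[R]_n -> Prop).

(* The basis vectors c^1..c^n are the rows of an integer matrix C
   (row i, 0-based, is c^{i+1}). *)
Definition realmx (C : 'M[int]_n) : 'M[R]_n := map_mx (fun z : int => z%:~R) C.

Definition cdot (C : 'M[int]_n) (i : 'I_n) x : R := (realmx C *m x) i 0.

Definition lattice_basis (C : 'M[int]_n) : Prop :=
  (forall lam : 'rV[R]_n, lam *m realmx C = 0 -> lam = 0) /\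
  (forall v : 'rV[int]_n, exists lam : 'rV[int]_n, v = lam *m C).

Definition is_int_vec x : Prop := forall i, x i 0 \is a Num.int.

Definition Kcone (C : 'M[int]_n) x : Prop := forall i, 0 <= cdot C i x.

Definition lex_lt (C : 'M[int]_n) x y : Prop :=
  x <> y /\ exists i : 'I_n,
    (forall j : 'I_n, (j < i)%N -> cdot C j x = cdot C j y) /\
    cdot C i x < cdot C i y.

Definition lex_ge (C : 'M[int]_n) x y : Prop := x = y \/ lex_lt C y x.

Definition conv P x : Prop :=
  exists (m : nat) (p : 'I_m -> 'cV[R]_n) (w : 'I_m -> R),
    (forall j, P (p j)) /\ (forall j, 0 <= w j) /\ \sum_j w j = 1 /\
    x = \sum_j w j *: p j.

Definition Qset (C : 'M[int]_n) xbar : 'cV[R]_n -> Prop :=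
  conv (fun x => Kcone C x /\ is_int_vec x /\ lex_ge C x xbar).

Definition rec_cone P d : Prop :=
  forall x, P x -> forall t : R, 0 <= t -> P (x + t *: d).

Definition polyhedron P : Prop :=
  exists (m : nat) (A : 'M[R]_(m, n)) (b : 'cV[R]_m),
    forall x, P x <-> (forall i, (A *m x) i 0 <= b i 0).

(* full-dimensional: contains n+1 affinely independent points
   x0, x0 + d_1, ..., x0 + d_n (d_j = columns of an invertible D) *)
Definition full_dim P : Prop :=
  exists x0 (D : 'M[R]_n),
    P x0 /\ D \in unitmx /\ (forall j : 'I_n, P (x0 + col j D)).

Definition extreme_point P x : Prop :=
  P x /\ forall y z (t : R), P y -> P z -> 0 < t < 1 ->
    x = t *: y + (1 - t) *: z -> y = x /\ z = x.

(* l (0-based) is the leading index of xbar: the largest i with c^i xbar > 0 *)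
Definition leading_index (C : 'M[int]_n) xbar (l : 'I_n) : Prop :=
  0 < cdot C l xbar /\ forall i : 'I_n, (l < i)%N -> ~ (0 < cdot C i xbar).

(* v is the point v^k (0-based k) for xbar *)
Definition vpoint (C : 'M[int]_n) xbar (k : 'I_n) v : Prop :=
  (forall i : 'I_n, (i < k)%N -> cdot C i v = cdot C i xbar) /\
  cdot C k v = cdot C k xbar + 1 /\
  (forall i : 'I_n, (k < i)%N -> cdot C i v = 0).

End Defs.

Arguments realmx {R n}.
Arguments cdot {R n}.
Arguments lattice_basis R {n}.
Arguments is_int_vec {R n}.
Arguments Kcone {R n}.
Arguments lex_lt {R n}.
Arguments lex_ge {R n}.
Arguments conv {R n}.
Arguments Qset {R n}.
Arguments rec_cone {R n}.
Arguments polyhedron {R n}.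
Arguments full_dim {R n}.
Arguments extreme_point {R n}.
Arguments leading_index {R n}.
Arguments vpoint {R n}.

(* Main.v *)
Require Import Defs.
From HB Require Import structures.
From mathcomp Require Import all_boot all_order all_algebra.
From mathcomp Require Import reals.
From mathcomp Require Import ring lra.
Import Order.TTheory GRing.Theory Num.Theory.
Local Open Scope ring_scope.
Set Implicit Arguments. Unset Strict Implicit. Unset Printing Implicit Defensive.

Section Gen.
Variables (R : realType) (n : nat).

Definition yn (y : 'cV[R]_n) (j : nat) : R := \sum_(i < n) ((i:nat) == j)%:R * y i 0.

Lemma yn_ord y (j : 'I_n) : yn y j = y j 0.
Proof.
rewrite /yn (bigD1 j) //= eqxx mul1r big1 ?addr0 // => i ij.
by move/negbTE: ij; rewrite -val_eqE /= => ->; rewrite mul0r.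
Qed.

Lemma yn_ge y j : (n <= j)%N -> yn y j = 0.
Proof.
move=> hj; rewrite /yn big1 // => i _.
by rewrite (_ : (i:nat) == j = false) ?mul0r //; apply/negbTE; rewrite neq_ltn (leq_trans (ltn_ord i) hj).
Qed.

Lemma yn_col (F : nat -> R) j : yn (\col_(i < n) F i) j = if (j < n)%N then F j else 0.
Proof.
case: ltnP => hj; last by rewrite yn_ge.
by rewrite -[j]/(nat_of_ord (Ordinal hj)) yn_ord mxE.
Qed.

Lemma ynD y z j : yn (y + z) j = yn y j + yn z j.
Proof. by rewrite /yn -big_split /=; apply: eq_bigr => i _; rewrite mxE mulrDr. Qed.

Lemma ynZ t y j : yn (t *: y) j = t * yn y j.
Proof. by rewrite /yn mulr_sumr; apply: eq_bigr => i _; rewrite mxE mulrCA. Qed.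

Lemma ynB y z j : yn (y - z) j = yn y j - yn z j.
Proof. by rewrite /yn -sumrB /=; apply: eq_bigr => i _; rewrite !mxE mulrBr. Qed.

Lemma yn_inj y z : (forall j, yn y j = yn z j) -> y = z.
Proof. by move=> h; apply/matrixP => i k; rewrite ord1 -!yn_ord h. Qed.

Fixpoint Lc (a : nat -> R) (j : nat) : R :=
  match j with 0 => 1 | j'.+1 => (a j' + 1) * Lc a j' end.
Fixpoint Lg (a : nat -> R) (j : nat) (i : nat) : R :=
  match j with 0 => 0 | j'.+1 => (a j' + 1) * Lg a j' i - ((i == j')%:R) end.

Definition Lfun a j (y : 'cV[R]_n) := Lc a j + \sum_(i < n) Lg a j i * y i 0.

Lemma Lfun0 a y : Lfun a 0 y = 1.
Proof. by rewrite /Lfun /= big1 ?addr0 // => i; rewrite mul0r. Qed.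

Lemma LfunS a j y : Lfun a j.+1 y = (a j + 1) * Lfun a j y - yn y j.
Proof.
rewrite /Lfun /= mulrDr -addrA; congr (_ + _).
by rewrite mulr_sumr /yn -sumrB; apply: eq_bigr => i _; rewrite mulrBl mulrA.
Qed.

Lemma LfunD a j y z : Lfun a j (y + z) = Lfun a j y + \sum_(i < n) Lg a j i * z i 0.
Proof. by rewrite /Lfun -addrA -big_split; congr (_ + _); apply: eq_bigr => i _; rewrite mxE mulrDr. Qed.

Definition Hc (a : nat -> R) (y : 'cV[R]_n) :=
  forall j : nat, 0 <= yn y j /\ a j * Lfun a j y <= yn y j.

Definition Ay (a : nat -> R) : 'M[R]_(n + n, n) :=
  \matrix_(r, i) match split r with
                 | inl j => a j * Lg a j i - ((i:nat) == j)%:R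
                 | inr j => - ((i:nat) == j)%:R end.
Definition By (a : nat -> R) : 'cV[R]_(n + n) :=
  \col_r match split r with inl j => - (a j * Lc a j) | inr j => 0 end.

Lemma Ay_mul a y r : (Ay a *m y) r 0 = match split r with
  | inl j => a j * (Lfun a j y - Lc a j) - yn y j
  | inr j => - yn y j end.
Proof.
rewrite mxE /Lfun; under eq_bigr => i _ do rewrite mxE.
case: split => j.
  rewrite addrAC subrr add0r.
  rewrite mulr_sumr /yn -sumrB; apply: eq_bigr => i _ /=.
  by rewrite mulrBl mulrA.
by rewrite /yn -sumrN; apply: eq_bigr => i _; rewrite mulNr.
Qed.

Lemma Hy_iff a y : (forall j, (n <= j)%N -> a j = 0) ->
  (forall r, (Ay a *m y) r 0 <= By a r 0) <-> Hc a y.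
Proof.
move=> a0; split => [h j | h r].
  case: (ltnP j n) => hj; last by rewrite yn_ge // a0 // mul0r.
  have h1 := h (unsplit (inl (Ordinal hj))); have h2 := h (unsplit (inr (Ordinal hj))).
  rewrite Ay_mul mxE unsplitK /= in h1; rewrite Ay_mul mxE unsplitK /= in h2.
  split; first by rewrite -oppr_le0.
  move: h1; rewrite mulrBr /=; lra.
rewrite Ay_mul mxE; case: split => j /=; have [h1 h2] := h j.
  rewrite mulrBr; lra.
by rewrite oppr_le0.
Qed.

End Gen.

Lemma int_lt1 (R : realType) (x y : R) : x \is a Num.int -> y \is a Num.int -> x < y -> x + 1 <= y.
Proof.
move=> xi yi lxy; have d : y - x \is a Num.int by rewrite rpredB.
have := norm_intr_ge1 d; rewrite ger0_norm ?subr_ge0 ?(ltW lxy) //.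
rewrite subr_eq0 gt_eqF // => /(_ isT); lra.
Qed.

Lemma yn_ge0 (R : realType) n (y : 'cV[R]_n) : (forall i, 0 <= y i 0) -> forall j, 0 <= yn y j.
Proof.
move=> h j; case: (ltnP j n) => hj; last by rewrite yn_ge.
by rewrite -[j]/(nat_of_ord (Ordinal hj)) yn_ord.
Qed.

Section Good.
Variables (R : realType) (n : nat) (A : 'cV[R]_n).
Hypothesis A0 : forall i, 0 <= A i 0.
Hypothesis Aint : forall i, A i 0 \is a Num.int.
Let a := yn A.

Lemma a_ge0 j : 0 <= a j.
Proof. by rewrite /a; case: (ltnP j n) => hj; [rewrite -[j]/(nat_of_ord (Ordinal hj)) yn_ord | rewrite yn_ge]. Qed.

Lemma a_out j : (n <= j)%N -> a j = 0.
Proof. exact: yn_ge. Qed.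

Lemma Lg_le0 j i : Lg a j i <= 0.
Proof.
elim: j => //= j ih; have h := a_ge0 j.
have p : (a j + 1) * Lg a j i <= 0 by rewrite mulr_ge0_le0 // addr_ge0.
have := ler0n R (i == j); lra.
Qed.


Lemma Hc_mono (y d : 'cV[R]_n) : Hc a y -> (forall i, 0 <= d i 0) -> Hc a (y + d).
Proof.
move=> h d0 j; have [h1 h2] := h j; have := yn_ge0 d0 j; rewrite ynD LfunD => dj.
split; first by rewrite addr_ge0.
have s0 : \sum_(i < n) Lg a j i * d i 0 <= 0.
  by rewrite -oppr_ge0 -sumrN; apply: sumr_ge0 => i _; rewrite -mulNr mulr_ge0 // oppr_ge0 Lg_le0.
have := a_ge0 j => aj.
have : a j * (Lfun a j y + \sum_(i < n) Lg a j i * d i 0) <= a j * Lfun a j y.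
  by rewrite ler_wpM2l // gerDl.
lra.
Qed.

Lemma L_pref (y : 'cV[R]_n) k : (forall j, (j < k)%N -> yn y j = a j) -> forall j, (j <= k)%N -> Lfun a j y = 1.
Proof.
move=> h; elim => [|j ih] hj; first exact: Lfun0.
by rewrite LfunS ih ?(ltnW hj) // h //; ring.
Qed.

Definition good (q : 'cV[R]_n) :=
  (forall i, 0 <= q i 0) /\ (forall i, q i 0 \is a Num.int) /\
  (q = A \/ exists i : 'I_n, (forall j : 'I_n, (j < i)%N -> A j 0 = q j 0) /\ A i 0 < q i 0).

Lemma good_Hc q : good q -> Hc a q.
Proof.
move=> [q0 [qi ql]] j; case: (ltnP j n) => hj; last by rewrite yn_ge // a_out // mul0r.
split; first exact: yn_ge0.
have aj : a j = A (Ordinal hj) 0 by rewrite /a -yn_ord.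
have qj : yn q j = q (Ordinal hj) 0 by rewrite -yn_ord.
case: ql => [-> | [i [hi1 hi2]]].
  by rewrite (@L_pref A n) ?mulr1 ?(ltnW hj).
have pre : forall j, (j < i)%N -> yn q j = a j.
  move=> k hk; have hk' : (k < n)%N by apply: ltn_trans hk (ltn_ord i).
  by rewrite /a -[k]/(nat_of_ord (Ordinal hk')) !yn_ord hi1.
case: (ltngtP j i) => hji.
- by rewrite (L_pref pre (ltnW hji)) mulr1 pre.
- have key : forall d, Lfun a (i.+1 + d) q <= 0.
    elim => [|d ih].
      rewrite addn0 LfunS (L_pref pre (leqnn _)) mulr1 /a !yn_ord.
      have := int_lt1 (Aint i) (qi i) hi2; lra.
    rewrite addnS LfunS; have := yn_ge0 q0 (i.+1 + d); have := a_ge0 (i.+1 + d).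
    move=> h1 h2; have : (a (i.+1 + d) + 1) * Lfun a (i.+1 + d) q <= 0.
      by rewrite mulr_ge0_le0 // addr_ge0.
    lra.
  have := key (j - i.+1)%N; rewrite subnKC // => h.
  apply: le_trans (yn_ge0 q0 j); exact: mulr_ge0_le0 (a_ge0 j) h.
- by rewrite (L_pref pre) ?hji // mulr1 /a !yn_ord; exact: ltW.
Qed.

End Good.

Lemma max0_cases (R : realType) (x : R) :
  (0 <= x /\ Num.max 0 x = x) \/ (x < 0 /\ Num.max 0 x = 0).
Proof.
case: (leP 0 x) => h; [left; split => //; exact: max_r | right; split => //].
Qed.

Lemma tele (R : realType) (u : nat -> R) N i :
  \sum_(0 <= k < N) ((i <= k)%N%:R * (u k - u k.+1)) = if (i <= N)%N then u i - u N else 0.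
Proof.
elim: N => [|N ih]; first by rewrite big_nil; case: i => //= *; rewrite subrr.
rewrite big_nat_recr //= ih; case: (ltngtP i N) => h.
- by rewrite ltnW ?ltnS 1?ltnW // mul1r; ring.
- rewrite mul0r addr0; case: ifP => // h'.
  have -> : i = N.+1 by apply/eqP; rewrite eqn_leq h' h.
  by rewrite subrr.
- by rewrite -h leqnSn mul1r; ring.
Qed.

Lemma sum_delta (R : realType) N (F : nat -> R) i : (i < N)%N ->
  \sum_(k < N) ((i == k)%:R * F k) = F i.
Proof.
move=> hi; rewrite (bigD1 (Ordinal hi)) //= eqxx mul1r big1 ?addr0 // => k hk.
suff -> : (i == k) = false by rewrite mul0r.
by apply/negbTE; apply: contra hk => /eqP e; apply/eqP/val_inj.
Qed.

Section Dec.
Variables (R : realType) (n : nat) (A : 'cV[R]_n).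
Hypothesis A0 : forall i, 0 <= A i 0.
Hypothesis Aint : forall i, A i 0 \is a Num.int.
Let a := yn A.

Definition vk (k : nat) : 'cV[R]_n := \col_(i < n) (a i * (i <= k)%N%:R + (i == k :> nat)%:R).
Definition ev (k : nat) : 'cV[R]_n := \col_(i < n) (i == k :> nat)%:R.

Lemma good_vk k : good A (vk k).
Proof.
split; [|split].
- by move=> i; rewrite mxE addr_ge0 ?mulr_ge0 ?(a_ge0 A0).
- move=> i; rewrite mxE rpredD ?rpredM ?natr_int //.
  by rewrite /a yn_ord.
case: (ltnP k n) => hk; [right; exists (Ordinal hk); split => /=|left].
- move=> j hj; rewrite mxE /a yn_ord ltnW // (_ : (j == k :> nat) = false) ?mulr1 ?addr0 //.
  by apply/negbTE; rewrite neq_ltn hj.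
- by rewrite mxE /a yn_ord leqnn eqxx mulr1 ltrDl ltr01.
- apply/matrixP => i j; rewrite ord1 mxE /a yn_ord (leq_trans (ltnW (ltn_ord i)) hk).
  by rewrite (_ : (i == k :> nat) = false) ?mulr1 ?addr0 //; apply/negbTE; rewrite neq_ltn (leq_trans (ltn_ord i) hk).
Qed.

Lemma good_add q i (m : R) : good A q -> m \is a Num.int -> 0 <= m -> good A (q + m *: ev i).
Proof.
move=> [q0 [qi ql]] mi m0; split; [|split].
- by move=> j; rewrite !mxE addr_ge0 ?mulr_ge0.
- by move=> j; rewrite !mxE rpredD ?rpredM ?natr_int.
have [->|mp] := eqVneq m 0; first by rewrite scale0r addr0.
have {mp} mp : 0 < m by rewrite lt_def mp.
case: (ltnP i n) => hi; last first.
  have -> : ev i = 0.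
    apply/matrixP => j k; rewrite !mxE (_ : (j == i :> nat) = false) //.
    by apply/negbTE; rewrite neq_ltn (leq_trans (ltn_ord j) hi).
  by rewrite scaler0 addr0.
right; case: ql => [->|[k [hk1 hk2]]].
  exists (Ordinal hi); split => /=.
    move=> j hj; rewrite !mxE (_ : (j == i :> nat) = false) ?mulr0 ?addr0 //.
    by apply/negbTE; rewrite neq_ltn hj.
  rewrite !mxE eqxx mulr1; lra.
case: (leqP k i) => hki.
  exists k; split.
    move=> j hj; rewrite !mxE (_ : (j == i :> nat) = false) ?mulr0 ?addr0 ?hk1 //.
    by apply/negbTE; rewrite neq_ltn (leq_trans hj hki).
  rewrite !mxE; have : 0 <= m * (k == i :> nat)%:R by rewrite mulr_ge0.
  lra.
exists (Ordinal hi); split => /=.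
  move=> j hj; rewrite !mxE (_ : (j == i :> nat) = false) ?mulr0 ?addr0 ?hk1 //.
    exact: ltn_trans hj hki.
  by apply/negbTE; rewrite neq_ltn hj.
rewrite !mxE eqxx mulr1 -(hk1 (Ordinal hi)) //; lra.
Qed.

End Dec.

Section Dec2.
Variables (R : realType) (n : nat) (A : 'cV[R]_n).
Hypothesis A0 : forall i, 0 <= A i 0.
Hypothesis Aint : forall i, A i 0 \is a Num.int.
Let a := yn A.

Lemma decomp (Y : 'cV[R]_n) : Hc a Y -> exists lam : 'I_n.+1 -> R,
  (forall k, 0 <= lam k) /\ \sum_k lam k = 1 /\
  forall i : 'I_n, (\sum_k lam k *: vk A k) i 0 <= Y i 0.
Proof.
move=> hY.
pose Rr j := if (j <= n)%N then Num.max 0 (Lfun a j Y) else 0.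
have step : forall j, (j < n)%N -> (a j + 1) * Rr j - yn Y j <= Rr j.+1 /\ Rr j.+1 <= Rr j.
  move=> j hj; rewrite /Rr ltnW // hj LfunS.
  have [h1 h2] := hY j; have aj := a_ge0 A0 j.
  have p1 : (a j + 1) * Lfun a j Y = a j * Lfun a j Y + Lfun a j Y by ring.
  case: (max0_cases (Lfun a j Y)) => [[l0 ->]|[l0 ->]];
  case: (max0_cases ((a j + 1) * Lfun a j Y - yn Y j)) => [[l1 ->]|[l1 ->]]; rewrite ?p1.
  - split; lra.
  - split; lra.
  - have : a j * Lfun a j Y <= 0 by rewrite mulr_ge0_le0 // ltW.
    split; lra.
  - split; lra.
have Rr0 : forall j, 0 <= Rr j by move=> j; rewrite /Rr; case: ifP => // _; rewrite le_max lexx.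
have Rrn : Rr n.+1 = 0 by rewrite /Rr ltnn.
have tl : forall i, (i <= n.+1)%N -> \sum_(k < n.+1) (i <= k)%N%:R * (Rr k - Rr k.+1) = Rr i.
  move=> i hi; rewrite -(big_mkord xpredT (fun k => (i <= k)%N%:R * (Rr k - Rr k.+1))).
  by rewrite tele hi Rrn subr0.
exists (fun k : 'I_n.+1 => Rr k - Rr k.+1); split; [|split].
- move=> k; rewrite subr_ge0; case: (ltnP k n) => hk; first exact: (step _ hk).2.
  have -> : (k : nat) = n by apply/eqP; rewrite eqn_leq hk -ltnS ltn_ord.
  by rewrite Rrn.
- have R0 : Rr 0%N = 1 by rewrite /Rr /= Lfun0 max_r ?ler01.
  have := tl 0%N isT; rewrite R0 => <-.
  by apply: eq_bigr => k _; rewrite mul1r.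
move=> i; rewrite summxE.
rewrite (eq_bigr (fun k : 'I_n.+1 => a i * ((i <= k)%N%:R * (Rr k - Rr k.+1)) +
     (i == k :> nat)%:R * (Rr k - Rr k.+1))); last first.
  by move=> k _; rewrite !mxE /a; ring.
rewrite big_split /= -mulr_sumr tl ?(ltnW (ltnW (ltn_ord i))) //.
rewrite (sum_delta (fun k => Rr k - Rr k.+1)) ?(ltnW (ltn_ord i)) //.
have [h1 h2] := step i (ltn_ord i); move: h1; rewrite yn_ord.
have : a i * Rr i + Rr i = (a i + 1) * Rr i by ring.
lra.
- by rewrite ltnS ltnW.
- exact: leq_trans (ltnW (ltn_ord i)) (leqnSn n).
Qed.

End Dec2.

Section SplitR.
Variables (R : realType) (n : nat).

Lemma sum_pair (F : 'I_n.+1 * bool -> R) : \sum_p F p = \sum_i (F (i, true) + F (i, false)).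
Proof.
transitivity (\sum_(p : 'I_n.+1 * bool) (fun i b => F (i, b)) p.1 p.2).
  by apply: eq_bigr => -[i b].
rewrite -(pair_bigA _ (fun i b => F (i, b))) /=.
by apply: eq_bigr => i _; rewrite big_bool.
Qed.

Lemma split_r (r : 'cV[R]_n) : (forall i, 0 <= r i 0) ->
  exists (w m : 'I_n.+1 * bool -> R),
  (forall p, 0 <= w p) /\ \sum_p w p = 1 /\ (forall p, m p \is a Num.int /\ 0 <= m p) /\
  forall q, q + r = \sum_p w p *: (q + m p *: @ev R n p.1).
Proof.
move=> r0.
pose N1 : R := n.+1%:R.
have N1p : 0 < N1 by rewrite ltr0n.
pose s (i : nat) := N1 * yn r i.
have s0 : forall i, 0 <= s i.
  by move=> i; apply: mulr_ge0; [exact: ltW | exact: yn_ge0].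
pose f i := Num.floor (s i).
pose fr i := s i - (f i)%:~R.
have fr01 : forall i, 0 <= fr i /\ fr i < 1.
  move=> i; have /andP[h1 h2] := floor_itv (s i); rewrite intrD in h2.
  by rewrite /fr /f; split; lra.
pose w (p : 'I_n.+1 * bool) := N1^-1 * (if p.2 then fr p.1 else 1 - fr p.1).
pose m (p : 'I_n.+1 * bool) := if p.2 then (f p.1)%:~R + 1 else (f p.1)%:~R : R.
exists w, m; split; [|split; [|split]].
- move=> [i b]; rewrite /w; apply: mulr_ge0; first by rewrite invr_ge0 ltW.
  by case: b; have := fr01 i => /=; lra.
- rewrite sum_pair /w /=.
  rewrite (eq_bigr (fun _ => N1^-1)); last by move=> i _; ring.
  by rewrite sumr_const card_ord -mulr_natr mulVf // gt_eqF.
- move=> [i b]; rewrite /m /=; have f0 : 0 <= (f i)%:~R :> R by rewrite ler0z floor_ge0.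
  case: b; split; rewrite ?rpredD ?intr_int ?rpred1 //; lra.
move=> q; apply/matrixP => j k; rewrite ord1 {k} summxE !mxE.
rewrite (eq_bigr (fun p => w p * q j 0 + w p * m p * (j == p.1 :> nat)%:R)); last first.
  by move=> p _; rewrite !mxE; ring.
rewrite big_split /= -mulr_suml.
have -> : \sum_p w p = 1.
  rewrite sum_pair /w /= (eq_bigr (fun _ => N1^-1)); last by move=> i _; ring.
  by rewrite sumr_const card_ord -mulr_natr mulVf // gt_eqF.
rewrite sum_pair /=.
rewrite (eq_bigr (fun i : 'I_n.+1 => (j == i :> nat)%:R * (N1^-1 * s i))); last first.
  move=> i _; rewrite /w /m /fr /=; field.
  by rewrite ?gt_eqF // nat1r ltr0n.
have hj : (j < n.+1)%N by rewrite ltnS ltnW.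
have h := sum_delta (fun i => N1^-1 * s i) hj; rewrite /= in h; rewrite h mul1r.
by rewrite /s mulKf ?gt_eqF // yn_ord.
Qed.

End SplitR.

Lemma sum_enum (V : nmodType) (I : finType) (F : I -> V) : \sum_(j < #|I|) F (enum_val j) = \sum_i F i.
Proof. by rewrite -big_enum_val; apply: eq_bigl. Qed.

Section Conv.
Variables (R : realType) (n : nat).
Implicit Types (P : 'cV[R]_n -> Prop).

Lemma conv_fin (I : finType) P (p : I -> 'cV[R]_n) (w : I -> R) :
  (forall i, P (p i)) -> (forall i, 0 <= w i) -> \sum_i w i = 1 ->
  conv P (\sum_i w i *: p i).
Proof.
move=> hp hw hs; exists #|I|, (fun j => p (enum_val j)), (fun j => w (enum_val j)).
split; first by move=> j.
split; first by move=> j.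
by rewrite (sum_enum w) (sum_enum (fun i => w i *: p i)).
Qed.

Lemma conv1 P x : P x -> conv P x.
Proof.
move=> h; exists 1%N, (fun _ => x), (fun _ => 1).
by rewrite !big_ord1 scale1r; do !split => //; move=> j; rewrite ler01.
Qed.

Lemma ext_comb P (v : 'cV[R]_n) :
  (forall m (w : 'I_m -> R) p, (forall j, P (p j)) -> (forall j, 0 <= w j) ->
      \sum_j w j = 1 -> P (\sum_j w j *: p j)) ->
  extreme_point P v ->
  forall m (lam : 'I_m -> R) p, (forall k, P (p k)) -> (forall k, 0 <= lam k) ->
  \sum_k lam k = 1 -> v = \sum_k lam k *: p k -> exists k, v = p k.
Proof.
move=> cvx [Pv ext]; elim => [|m ih] lam p hp hl hs hv.
  by move: hs; rewrite big_ord0 => /eqP; rewrite eq_sym oner_eq0.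
move: hs hv; rewrite !big_ord_recl => hs hv.
have hl0 := hl ord0.
have hrest : forall i : 'I_m, 0 <= lam (lift ord0 i) by move=> i.
have sr0 : 0 <= \sum_(i < m) lam (lift ord0 i) by apply: sumr_ge0.
case: (eqVneq (lam ord0) 0) => [l0|l0].
  have hs' : \sum_(i < m) lam (lift ord0 i) = 1 by move: hs; rewrite l0 add0r.
  have hv' : v = \sum_(i < m) lam (lift ord0 i) *: p (lift ord0 i) by move: hv; rewrite l0 scale0r add0r.
  have [k hk] := ih _ _ (fun i => hp _) hrest hs' hv'.
  by exists (lift ord0 k).
case: (eqVneq (lam ord0) 1) => [l1|l1].
  exists ord0; move: hs; rewrite l1 => /eqP; rewrite -subr_eq0 addrC addKr => /eqP h.
  have := (psumr_eq0P (fun i _ => hrest i) h) => hz.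
  by rewrite hv l1 scale1r big1 ?addr0 // => i _; rewrite hz // scale0r.
have lp : 0 < lam ord0 by rewrite lt_def l0.
have lt1 : lam ord0 < 1.
  rewrite lt_def eq_sym l1 /=; lra.
pose c := (1 - lam ord0)^-1.
have cp : 0 < 1 - lam ord0 by lra.
pose w := \sum_(i < m) (c * lam (lift ord0 i)) *: p (lift ord0 i).
have Pw : P w.
  apply: cvx => //; first by move=> j; rewrite mulr_ge0 // invr_ge0 ltW.
  rewrite -mulr_sumr /c; have -> : \sum_(i < m) lam (lift ord0 i) = 1 - lam ord0 by lra.
  by rewrite mulVf // gt_eqF.
have : v = lam ord0 *: p ord0 + (1 - lam ord0) *: w.
  rewrite hv /w scaler_sumr; congr (_ + _); apply: eq_bigr => i _.
  by rewrite scalerA mulrA /c mulfV ?gt_eqF // mul1r.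
move/(ext _ _ _ (hp ord0) Pw); rewrite lp lt1 => /(_ isT) [h _].
by exists ord0.
Qed.

End Conv.

Section Tight.
Variables (R : realType) (n : nat) (A : 'cV[R]_n).
Hypothesis A0 : forall i, 0 <= A i 0.
Let a := yn A.

Lemma Lfun_aff j (Y Z : 'cV[R]_n) t :
  Lfun a j (t *: Y + (1 - t) *: Z) = t * Lfun a j Y + (1 - t) * Lfun a j Z.
Proof.
rewrite /Lfun !mulrDr !mulr_sumr.
have -> : \sum_(i < n) Lg a j i * (t *: Y + (1 - t) *: Z) i 0 =
   \sum_(i < n) (t * (Lg a j i * Y i 0)) + \sum_(i < n) ((1 - t) * (Lg a j i * Z i 0)).
  by rewrite -big_split; apply: eq_bigr => i _; rewrite !mxE /=; ring.
ring.
Qed.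

Lemma yn_aff j (Y Z : 'cV[R]_n) t : yn (t *: Y + (1 - t) *: Z) j = t * yn Y j + (1 - t) * yn Z j.
Proof. by rewrite ynD !ynZ. Qed.

Lemma tight0 (fY fZ t : R) : 0 < t < 1 -> 0 <= fY -> 0 <= fZ -> t * fY + (1 - t) * fZ = 0 -> fY = 0.
Proof.
move=> /andP[t0 t1] hY hZ h.
have p1 : 0 <= t * fY by rewrite mulr_ge0 // ltW.
have p2 : 0 <= (1 - t) * fZ by rewrite mulr_ge0 // subr_ge0 ltW.
have : t * fY = 0 by lra.
by move/eqP; rewrite mulf_eq0 gt_eqF //= => /eqP.
Qed.

Lemma L_prop (Y : 'cV[R]_n) k : (forall i, (k < i)%N -> yn Y i = 0) ->
  forall d, Lfun a (k.+1 + d) Y = (\prod_(i < d) (a (k.+1 + i) + 1)) * Lfun a k.+1 Y.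
Proof.
move=> h; elim => [|d ih]; first by rewrite addn0 big_ord0 mul1r.
rewrite addnS LfunS h ?ih ?big_ord_recr /=; last by rewrite ltnS leq_addr.
rewrite subr0; ring.
Qed.

Lemma prod_pos d k : 0 < \prod_(i < d) (a (k + i) + 1).
Proof. by apply: prodr_gt0 => i _; have := a_ge0 A0 (k + i); rewrite /a; lra. Qed.

Lemma vk_yn k j : yn (vk A k) j = if (j < n)%N then a j * (j <= k)%N%:R + (j == k)%:R else 0.
Proof.
case: ltnP => hj; last by rewrite yn_ge.
by rewrite -[j]/(nat_of_ord (Ordinal hj)) yn_ord mxE.
Qed.

Lemma tight_pref (Y Z : 'cV[R]_n) t k : (k <= n)%N -> 0 < t < 1 -> Hc a Y -> Hc a Z ->
  vk A k = t *: Y + (1 - t) *: Z ->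
  forall j, (j <= k)%N -> Lfun a j Y = 1 /\ (forall i, (i < j)%N -> yn Y i = a i).
Proof.
move=> kn t01 hY hZ hV; elim => [|j ih] hj; first by rewrite Lfun0.
have [ih1 ih2] := ih (ltnW hj).
have preV : forall i, (i < k)%N -> yn (vk A k) i = a i.
  move=> i hi; rewrite vk_yn (leq_trans hi kn) (ltnW hi) (_ : (i == k) = false) ?addr0 ?mulr1 //.
  by apply/negbTE; rewrite neq_ltn hi.
have LV := L_pref preV (ltnW hj).
have gV : yn (vk A k) j - a j * Lfun a j (vk A k) = 0 by rewrite LV preV // mulr1 subrr.
have gY : yn Y j - a j * Lfun a j Y = 0.
  have [y1 y2] := hY j; have [z1 z2] := hZ j.
  apply: (tight0 t01 _ _ (fY := _) (fZ := yn Z j - a j * Lfun a j Z)); rewrite ?subr_ge0 //.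
  by rewrite -gV hV yn_aff Lfun_aff; ring.
move: gY; rewrite ih1 mulr1 => /eqP; rewrite subr_eq0 => /eqP gY.
split; first by rewrite LfunS ih1 gY; ring.
by move=> i; rewrite ltnS leq_eqVlt => /orP[/eqP ->|/ih2].
Qed.

Lemma tight_n (Y Z : 'cV[R]_n) t : 0 < t < 1 -> Hc a Y -> Hc a Z ->
  vk A n = t *: Y + (1 - t) *: Z -> Y = vk A n.
Proof.
move=> t01 hY hZ hV; have [_ pre] := tight_pref (leqnn n) t01 hY hZ hV (leqnn n).
apply: yn_inj => j; rewrite vk_yn; case: ltnP => hj; last by rewrite yn_ge.
rewrite pre // ltnW // (_ : (j == n) = false) ?addr0 ?mulr1 //.
by apply/negbTE; rewrite neq_ltn hj.
Qed.

Lemma tight_k (Y Z : 'cV[R]_n) t k l : (k < l)%N -> (l < n)%N -> 0 < a l ->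
  0 < t < 1 -> Hc a Y -> Hc a Z ->
  vk A k = t *: Y + (1 - t) *: Z -> Y = vk A k.
Proof.
move=> kl ln al t01 hY hZ hV.
have kn : (k < n)%N by apply: ltn_trans kl ln.
have [LY pre] := tight_pref (ltnW kn) t01 hY hZ hV (leqnn k).
have Vz : forall i, (k < i)%N -> yn (vk A k) i = 0.
  move=> i hi; rewrite vk_yn; case: ifP => // _.
  by rewrite leqNgt hi (_ : (i == k) = false) ?mulr0 ?addr0 //; apply/negbTE; rewrite neq_ltn hi orbT.
have Yz : forall i, (k < i)%N -> yn Y i = 0.
  move=> i hi; have [y1 _] := hY i; have [z1 _] := hZ i.
  by apply: (tight0 t01 y1 z1); rewrite -yn_aff -hV Vz.
have preV : forall i, (i < k)%N -> yn (vk A k) i = a i.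
  move=> i hi; rewrite vk_yn (ltn_trans hi kn) (ltnW hi) (_ : (i == k) = false) ?addr0 ?mulr1 //.
  by apply/negbTE; rewrite neq_ltn hi.
have LV1 : Lfun a k.+1 (vk A k) = 0.
  by rewrite LfunS (L_pref preV (leqnn k)) vk_yn kn leqnn eqxx /=; ring.
have ld : l = (k.+1 + (l - k.+1))%N by rewrite subnKC.
have LVl : Lfun a l (vk A k) = 0 by rewrite ld (L_prop Vz) LV1 mulr0.
have gY : yn Y l - a l * Lfun a l Y = 0.
  have [y1 y2] := hY l; have [z1 z2] := hZ l.
  apply: (tight0 t01 _ _ (fZ := yn Z l - a l * Lfun a l Z)); rewrite ?subr_ge0 //.
  have gV : yn (vk A k) l - a l * Lfun a l (vk A k) = 0 by rewrite LVl Vz // mulr0 subr0.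
  by rewrite -gV hV yn_aff Lfun_aff; ring.
move: gY; rewrite Yz // sub0r => /eqP; rewrite oppr_eq0 mulf_eq0 gt_eqF //= ld (L_prop Yz) mulf_eq0.
rewrite gt_eqF ?prod_pos //= LfunS LY mulr1 subr_eq0 => /eqP hk.
apply: yn_inj => j; rewrite vk_yn; case: ltnP => hj; last by rewrite yn_ge.
case: (ltngtP j k) => hjk.
- by rewrite pre //= mulr1 addr0.
- by rewrite Yz //= mulr0 addr0.
- by rewrite hjk -hk /= mulr1.
Qed.

End Tight.

Section Main.
Variables (R : realType) (n : nat) (C : 'M[int]_n) (xbar : 'cV[R]_n).
Hypothesis HC : lattice_basis R C.
Hypothesis Kx : Kcone C xbar.
Hypothesis Ix : is_int_vec xbar.

Let M : 'M[R]_n := Defs.realmx C.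

Lemma exN : exists N : 'M[R]_n, N *m M = 1%:M /\ M *m N = 1%:M /\
  forall i j, N i j \is a Num.int.
Proof.
have [f hf] := fin_all_exists (fun i : 'I_n => HC.2 (delta_mx 0 i)).
pose L : 'M[int]_n := \matrix_(i < n, j < n) f i ord0 j.
have LC : L *m C = 1%:M.
  apply/matrixP => i j; rewrite !mxE.
  have := congr1 (fun m : 'rV[int]_n => m ord0 j) (hf i); rewrite !mxE /= eq_sym => ->.
  by apply: eq_bigr => k _; rewrite mxE.
exists (Defs.realmx L); have NM : Defs.realmx L *m M = 1%:M.
  by rewrite /M /Defs.realmx -map_mxM LC map_scalar_mx /= rmorph1.
split => //; split; first exact: mulmx1C.
by move=> i j; rewrite mxE intr_int.
Qed.


Lemma sum_pair2 (V : nmodType) (I J : finType) (F : I * J -> V) :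
  \sum_p F p = \sum_i \sum_j F (i, j).
Proof.
transitivity (\sum_(p : I * J) (fun i j => F (i, j)) p.1 p.2); first by apply: eq_bigr => -[i j].
by rewrite -(pair_bigA _ (fun i j => F (i, j))).
Qed.

Variable N : 'M[R]_n.
Hypotheses (NM : N *m M = 1%:M) (MN : M *m N = 1%:M) (Nint : forall i j, N i j \is a Num.int).
Let A := M *m xbar.
Let a := yn A.

Lemma NMx (x : 'cV[R]_n) : N *m (M *m x) = x. Proof. by rewrite mulmxA NM mul1mx. Qed.
Lemma MNq (q : 'cV[R]_n) : M *m (N *m q) = q. Proof. by rewrite mulmxA MN mul1mx. Qed.
Lemma Minj (x y : 'cV[R]_n) : M *m x = M *m y -> x = y.
Proof. by move=> h; rewrite -(NMx x) h NMx. Qed.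

Lemma A0 : forall i, 0 <= A i 0. Proof. exact: Kx. Qed.

Lemma Mint (x : 'cV[R]_n) : is_int_vec x -> forall i, (M *m x) i 0 \is a Num.int.
Proof.
move=> hx i; rewrite mxE; apply: rpred_sum => j _; apply: rpredM; last exact: hx.
by rewrite mxE intr_int.
Qed.

Lemma Aint : forall i, A i 0 \is a Num.int. Proof. exact: Mint. Qed.

Lemma Nint_v (q : 'cV[R]_n) : (forall i, q i 0 \is a Num.int) -> is_int_vec (N *m q).
Proof.
by move=> hq i; rewrite mxE; apply: rpred_sum => j _; apply: rpredM.
Qed.

Lemma Tgood (x : 'cV[R]_n) : (Kcone C x /\ is_int_vec x /\ lex_ge C x xbar) <-> good A (M *m x).
Proof.
split.
  move=> [k [ix lx]]; split; first exact: k.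
  split; first exact: Mint.
  case: lx => [->|[ne [i [h1 h2]]]]; [by left | right; exists i; split => //].
move=> [g0 [gi gl]]; split; first exact: g0.
split; first by rewrite -(NMx x); apply: Nint_v.
case: gl => [e|[i [h1 h2]]]; first by left; apply: Minj.
right; split; last by exists i.
by move=> e; move: h2; rewrite /A e ltxx.
Qed.

Lemma Hc_conv m (w : 'I_m -> R) (p : 'I_m -> 'cV[R]_n) :
  (forall j, Hc a (p j)) -> (forall j, 0 <= w j) -> \sum_j w j = 1 -> Hc a (\sum_j w j *: p j).
Proof.
move=> hp hw hs; apply: (proj1 (Hy_iff _ (@a_out _ _ A))) => r.
rewrite mulmx_sumr summxE.
have -> : By n a r 0 = \sum_j w j * By n a r 0 by rewrite -mulr_suml hs mul1r.
apply: ler_sum => j _; rewrite -scalemxAr mxE; apply: ler_wpM2l => //.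
by apply: (proj2 (Hy_iff _ (@a_out _ _ A))).
Qed.

Lemma decomp_eq (Y : 'cV[R]_n) : Hc a Y -> exists (lam : 'I_n.+1 -> R) (r : 'cV[R]_n),
  (forall k, 0 <= lam k) /\ \sum_k lam k = 1 /\ (forall i, 0 <= r i 0) /\
  Y = \sum_k lam k *: (vk A k + r).
Proof.
move=> hY; have [lam [l0 [ls lle]]] := decomp A0 hY.
exists lam, (Y - \sum_k lam k *: vk A k); split => //; split => //; split.
  by move=> i; rewrite !mxE subr_ge0; move: (lle i); rewrite summxE.
rewrite (eq_bigr (fun k => lam k *: vk A k + lam k *: (Y - \sum_k lam k *: vk A k))); last first.
  by move=> k _; rewrite scalerDr.
by rewrite big_split /= -scaler_suml ls scale1r addrC subrK.
Qed.

Lemma Q_iff (x : 'cV[R]_n) : Qset C xbar x <-> Hc a (M *m x).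
Proof.
split.
  move=> [m [p [w [hp [hw [hs ->]]]]]].
  rewrite mulmx_sumr (eq_bigr (fun j => w j *: (M *m p j))); last by move=> j _; rewrite scalemxAr.
  apply: Hc_conv => // j; apply: (good_Hc A0 Aint); exact/Tgood.
move=> hx; have [lam [r [l0 [ls [r0 eqx]]]]] := decomp_eq hx.
have [w [m [w0 [ws [mi hq]]]]] := split_r r0.
have -> : x = \sum_(kp : 'I_n.+1 * ('I_n.+1 * bool))
   (lam kp.1 * w kp.2) *: (N *m (vk A kp.1 + m kp.2 *: ev R n kp.2.1)).
  rewrite -[x in LHS]NMx eqx mulmx_sumr sum_pair2; apply: eq_bigr => k _.
  rewrite -scalemxAr hq mulmx_sumr scaler_sumr; apply: eq_bigr => p _.
  by rewrite -scalemxAr scalerA.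
apply: conv_fin.
- move=> [k p]; apply/Tgood; rewrite MNq; apply: good_add; first exact: good_vk A0 Aint k.
  + exact: (mi p).1.
  + exact: (mi p).2.
- by move=> [k p]; rewrite mulr_ge0.
rewrite sum_pair2 -ls; apply: eq_bigr => k _ /=.
by rewrite -mulr_sumr ws mulr1.
Qed.


Lemma Qx : Qset C xbar xbar.
Proof. by apply: conv1; apply/Tgood; split; [exact: A0 | split; [exact: Aint | left]]. Qed.

Lemma Q_conv m (w : 'I_m -> R) (p : 'I_m -> 'cV[R]_n) :
  (forall j, Qset C xbar (p j)) -> (forall j, 0 <= w j) -> \sum_j w j = 1 ->
  Qset C xbar (\sum_j w j *: p j).
Proof.
move=> hp hw hs; apply/Q_iff.
rewrite mulmx_sumr (eq_bigr (fun j => w j *: (M *m p j))); last by move=> j _; rewrite scalemxAr.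
by apply: Hc_conv => // j; apply/Q_iff.
Qed.

Lemma goodA : good A A.
Proof. by split; [exact: A0 | split; [exact: Aint | left]]. Qed.

Lemma part_rec d : rec_cone (Qset C xbar) d <-> Kcone C d.
Proof.
split.
  move=> hd i; rewrite /cdot -/M; case: (leP 0 ((M *m d) i 0)) => // hneg.
  pose t := (A i 0 + 1) / (- (M *m d) i 0).
  have t0 : 0 <= t by rewrite divr_ge0 // ?oppr_ge0 ?ltW //; have := A0 i; lra.
  have := hd _ Qx t t0; rewrite Q_iff => h; have [h1 _] := h i.
  move: h1; rewrite yn_ord mulmxDr -scalemxAr -/A.
  move: t0 hneg; rewrite /t; set B := M *m d => t0 hneg; have e : (A + ((A i 0 + 1) / - B i 0) *: B) i 0 = A i 0 + ((A i 0 + 1) / - B i 0) * B i 0.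
    by rewrite !mxE.
  rewrite e.
  have -> : (A i 0 + 1) / - B i 0 * B i 0 = - (A i 0 + 1) by field; rewrite lt_eqF.
  have := A0 i; lra.
move=> hd x hx t t0; apply/Q_iff; rewrite mulmxDr -scalemxAr.
apply: (Hc_mono A0); first exact/Q_iff.
by move=> i; rewrite mxE mulr_ge0 //; exact: hd.
Qed.

Lemma part_poly : polyhedron (Qset C xbar).
Proof.
exists (n + n)%N, (Ay n a *m M), (By n a) => x.
rewrite Q_iff -(Hy_iff _ (@a_out _ _ A)).
by split => h r; [rewrite -mulmxA | rewrite mulmxA]; exact: h.
Qed.

Lemma ev_col (j : 'I_n) : (delta_mx j 0 : 'cV[R]_n) = 1 *: ev R n j.
Proof. by apply/matrixP => i k; rewrite ord1 !mxE mul1r andbT. Qed.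

Lemma part_full : full_dim (Qset C xbar).
Proof.
exists xbar, N; split; first exact: Qx.
split; first exact: (mulmx1_unit NM).1.
move=> j; apply: conv1; apply/Tgood.
rewrite mulmxDr colE mulmxA MN mul1mx ev_col; apply: good_add; [exact: goodA | exact: rpred1 | exact: ler01].
Qed.


Lemma vk_entry k (i : 'I_n) : (vk A k) i 0 = A i 0 * (i <= k)%N%:R + (i == k :> nat)%:R.
Proof. by rewrite [LHS]mxE /a yn_ord. Qed.

Lemma Aev_entry c k (i : 'I_n) : (A + c *: ev R n k) i 0 = A i 0 + c * (i == k :> nat)%:R.
Proof. by rewrite !mxE. Qed.

Lemma vkn : vk A n = A.
Proof.
apply/matrixP => i j; rewrite ord1 vk_entry (ltnW (ltn_ord i)).
by rewrite (_ : (i == n :> nat) = false) ?mulr1 ?addr0 //; apply/negbTE; rewrite neq_ltn ltn_ord.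
Qed.

Lemma half01 : (0 : R) < (2^-1 : R) < 1.
Proof. by apply/andP; split; [rewrite invr_gt0 ltr0n | rewrite invf_lt1 ?ltr0n ?ltr1n]. Qed.

Lemma part_ext : xbar <> 0 -> forall l : 'I_n, leading_index C xbar l ->
  forall v, extreme_point (Qset C xbar) v <->
       (v = xbar \/ exists k : 'I_n, (k < l)%N /\ vpoint C xbar k v).
Proof.
move=> xne l [hl1 hl2] v.
have al : 0 < a l by rewrite /a yn_ord.
have aout : forall i : 'I_n, (l < i)%N -> A i 0 = 0.
  move=> i hi; have := A0 i; rewrite le_eqVlt => /orP[/eqP <- //|h].
  by case: (hl2 i hi h).
have Qvk : forall k, Qset C xbar (N *m vk A k).
  move=> k; apply: conv1; apply/Tgood; rewrite MNq. exact: (good_vk A0 Aint k).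
split.
- move=> ext; have [Qv extv] := ext.
  have [lam [r [l0 [ls [r0 eqv]]]]] := decomp_eq (proj1 (Q_iff v) Qv).
  have Qp : forall k, Qset C xbar (N *m (vk A k + r)).
    move=> k; apply/Q_iff; rewrite MNq; apply: (Hc_mono A0); last exact: r0.
    apply: (good_Hc A0 Aint). exact: (@good_vk R n A A0 Aint k).
  have ev' : v = \sum_k lam k *: (N *m (vk A k + r)).
    by rewrite -[v in LHS]NMx eqv mulmx_sumr; apply: eq_bigr => k _; rewrite scalemxAr.
  have [k hk] := ext_comb Q_conv ext Qp l0 ls ev'.
  have Mv : M *m v = vk A k + r by rewrite hk MNq.
  have Q2 : Qset C xbar (N *m (vk A k + 2%:R *: r)).
    apply/Q_iff; rewrite MNq; apply: (Hc_mono A0).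
      by apply: (good_Hc A0 Aint); exact: (good_vk A0 Aint k).
    by move=> i; rewrite mxE mulr_ge0 // ler0n.
  have e2 : v = 2^-1 *: (N *m vk A k) + (1 - 2^-1) *: (N *m (vk A k + 2%:R *: r)).
    apply: Minj; rewrite Mv mulmxDr -!scalemxAr !MNq.
    by apply/matrixP => i j; rewrite !mxE; field.
  have [hvk _] := extv _ _ _ (Qvk k) Q2 half01 e2.
  have Mvk : M *m v = vk A k by rewrite -hvk MNq.
  case: (ltnP k n) => hk'; last first.
    left; apply: Minj; rewrite Mvk (_ : (k : nat) = n) ?vkn //.
    by apply/eqP; rewrite eqn_leq hk' -ltnS ltn_ord.
  case: (ltnP k l) => hkl.
    right; exists (Ordinal hk'); split => //.
    rewrite /vpoint /cdot -/M Mvk -/A /=; split; [|split].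
    + move=> i hi; rewrite vk_entry ltnW // (_ : (i == k :> nat) = false) ?mulr1 ?addr0 //.
      by apply/negbTE; rewrite neq_ltn hi.
    + by rewrite vk_entry leqnn eqxx mulr1.
    + move=> i hi; rewrite vk_entry (_ : (i == k :> nat) = false) ?addr0.
        by rewrite leqNgt hi mulr0.
      by apply/negbTE; rewrite neq_ltn hi orbT.
  exfalso.
  have MvA : M *m v = A + 1 *: ev R n k.
    apply/matrixP => i j; rewrite ord1 Mvk vk_entry Aev_entry mul1r.
    case: (ltngtP i k) => hik /=.
    + by rewrite mulr1 addr0.
    + by rewrite aout ?mul0r ?addr0 //; exact: leq_ltn_trans hkl hik.
    + by rewrite mulr1.
  have Q3 : Qset C xbar (N *m (A + 2%:R *: ev R n k)).
    apply: conv1; apply/Tgood; rewrite MNq; apply: good_add; [exact: goodA | exact: natr_int | exact: ler0n].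
  have e3 : v = 2^-1 *: xbar + (1 - 2^-1) *: (N *m (A + 2%:R *: ev R n k)).
    apply: Minj; rewrite MvA (mulmxDr M) -!scalemxAr MNq -/A.
    apply/matrixP => i j; rewrite ord1 !Aev_entry.
    have -> : (2^-1 *: A + (1 - 2^-1) *: (A + 2%:R *: ev R n k)) i 0 =
       2^-1 * A i 0 + (1 - 2^-1) * (A + 2%:R *: ev R n k) i 0 by rewrite !mxE.
    by rewrite Aev_entry; field.
  have [hx _] := extv _ _ _ Qx Q3 half01 e3.
  move: MvA; rewrite -hx -/A => /matrixP /(_ (Ordinal hk') 0).
  by rewrite Aev_entry /= eqxx mul1r => /eqP; rewrite -subr_eq0 opprD addrA subrr add0r oppr_eq0 oner_eq0.
- case=> [-> | [k [hkl hvp]]].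
    split; first exact: Qx.
    move=> y z t Qy Qz t01 e.
    have hY := proj1 (Q_iff y) Qy; have hZ := proj1 (Q_iff z) Qz.
    have e1 : vk A n = t *: (M *m y) + (1 - t) *: (M *m z) by rewrite vkn /A e mulmxDr -!scalemxAr.
    have e2 : vk A n = (1 - t) *: (M *m z) + (1 - (1 - t)) *: (M *m y).
      have -> : 1 - (1 - t) = t by ring.
      by rewrite e1 addrC.
    have t01' : 0 < 1 - t < 1 by move/andP: t01 => [? ?]; apply/andP; split; lra.
    by split; apply: Minj; [rewrite (tight_n t01 hY hZ e1) | rewrite (tight_n t01' hZ hY e2)]; rewrite vkn.
  have Mv : M *m v = vk A k.
    have [h1 [h2 h3]] := hvp.
    apply/matrixP => i j; rewrite ord1 vk_entry; case: (ltngtP i k) => hik /=.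
    + by rewrite mulr1 addr0; apply: h1.
    + by rewrite mulr0 addr0; apply: h3.
    + by rewrite mulr1 (_ : i = k) ?h2 //; apply: val_inj.
  split.
    by apply: conv1; apply/Tgood; rewrite Mv; exact: good_vk A0 Aint k.
  move=> y z t Qy Qz t01 e.
  have hY := proj1 (Q_iff y) Qy; have hZ := proj1 (Q_iff z) Qz.
  have e1 : vk A k = t *: (M *m y) + (1 - t) *: (M *m z) by rewrite -Mv e mulmxDr -!scalemxAr.
  have e2 : vk A k = (1 - t) *: (M *m z) + (1 - (1 - t)) *: (M *m y).
    have -> : 1 - (1 - t) = t by ring.
    by rewrite e1 addrC.
  have t01' : 0 < 1 - t < 1 by move/andP: t01 => [? ?]; apply/andP; split; lra.
  have ln := ltn_ord l.
  by split; apply: Minj; rewrite Mv;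
    [rewrite (tight_k A0 hkl ln al t01 hY hZ e1) | rewrite (tight_k A0 hkl ln al t01' hZ hY e2)].
Qed.

End Main.

Unset Implicit Arguments.

Theorem lemma3 (R : realType) (n : nat) (C : 'M[int]_n) (xbar : 'cV[R]_n) :
  lattice_basis R C ->
  Kcone C xbar -> is_int_vec xbar ->
  (forall d, rec_cone (Qset C xbar) d <-> Kcone C d) /\
  polyhedron (Qset C xbar) /\
  full_dim (Qset C xbar) /\
  (xbar <> 0 -> forall l : 'I_n, leading_index C xbar l ->
     forall v, extreme_point (Qset C xbar) v <->
       (v = xbar \/ exists k : 'I_n, (k < l)%N /\ vpoint C xbar k v)).
Proof.
move=> HC Kx Ix; have [N [NM [MN Nint]]] := exN HC.
split; first by move=> d; exact: (part_rec Kx Ix NM MN Nint).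
split; first exact: (part_poly Kx Ix NM MN Nint).
split; first exact: (part_full Kx Ix NM MN Nint).
move=> xne l hl v; exact: (part_ext Kx Ix NM MN Nint xne hl).
Qed.
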